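(* Let $s\in\{3,4\}$ and consider an $s$-stage explicit Runge–Kutta method with coefficients $a_{ij}$ (with $a_{ij}=0$ for $j\ge i$) and $b_i>0$, which is of order $s$ in OCP. Let $c_i=\sum_{j=1}^s a_{ij}$ and $\bar c_i=\sum_{j=1}^s\bar a_{ij}$ where $\bar a_{ij}=b_j-\frac{b_ja_{ji}}{b_i}$. Then $c_i=\bar c_i$ for all $i=1,\dots,s$.
   Context: A Runge–Kutta method with coefficients $a_{ij}$, $b_i>0$ is of order $r$ in OCP if the partitioned Runge–Kutta method consisting of the method $(a_{ij},b_i)$ for the first component and the method $(\bar a_{ij},\bar b_i)$ with $\bar a_{ij}=b_j-b_ja_{ji}/b_i$, $\bar b_i=b_i$ for the second component has classical order $r$. *)

(* Defs.v *)
From mathcomp Require Import all_boot all_order all_algebra.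
From mathcomp Require Import reals.
Set Implicit Arguments. Unset Strict Implicit. Unset Printing Implicit Defensive.
Import Order.TTheory GRing.Theory Num.Theory.
Local Open Scope ring_scope.

(* Bicolored rooted trees (HLW, Sect. III.2): a root colour and a list of
   subtrees.  Colour [true] = first component (method (a,b)),
   colour [false] = second component (method (abar,bbar)). *)
Inductive btree := BNode of bool & seq btree.

Definition bcolor (t : btree) : bool := let: BNode c _ := t in c.

Fixpoint bsize (t : btree) : nat :=
  let: BNode _ ts := t in (sumn (map bsize ts)).+1.

Fixpoint bgamma (t : btree) : nat :=
  let: BNode _ ts := t in
  ((sumn (map bsize ts)).+1 * foldr muln 1%N (map bgamma ts))%N.

(* internal elementary weight Phi_i(t) of a partitioned RK method with
   coefficient matrices A c (c the colour); the edge from a vertex at stage i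
   to a child u at stage j carries A (colour of u) i j. *)
Fixpoint bphi (R : nzRingType) (s : nat) (A : bool -> 'I_s -> 'I_s -> R)
    (t : btree) (i : 'I_s) : R :=
  let: BNode _ ts := t in
  foldr (fun u acc => (\sum_(j < s) A (bcolor u) i j * bphi A u j) * acc) 1 ts.

Definition prk_order (R : fieldType) (s : nat) (A : bool -> 'I_s -> 'I_s -> R)
    (B : bool -> 'I_s -> R) (r : nat) : Prop :=
  forall t : btree, (bsize t <= r)%N ->
    \sum_(i < s) B (bcolor t) i * bphi A t i = ((bgamma t)%:R)^-1.

Definition abar (R : fieldType) (s : nat) (a : 'I_s -> 'I_s -> R)
    (b : 'I_s -> R) (i j : 'I_s) : R := b j - b j * a j i / b i.

Definition ocp_order (R : fieldType) (s : nat) (a : 'I_s -> 'I_s -> R)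
    (b : 'I_s -> R) (r : nat) : Prop :=
  prk_order (fun c => if c then a else abar a b) (fun _ => b) r.

(* Main.v *)
Require Import Defs.
From mathcomp Require Import all_boot all_order all_algebra.
From mathcomp Require Import reals.
From mathcomp Require Import ring.
Import Order.TTheory GRing.Theory Num.Theory.
Local Open Scope ring_scope.

Theorem proposition3p8 (R : realType) (s : nat)
    (a : 'I_s -> 'I_s -> R) (b : 'I_s -> R) :
  (s = 3%N \/ s = 4%N) ->
  (forall i j : 'I_s, (i <= j)%N -> a i j = 0) ->
  (forall i : 'I_s, 0 < b i) ->
  ocp_order a b s ->
  forall i : 'I_s, \sum_(j < s) a i j = \sum_(j < s) abar a b i j.
Proof.
move=> hs _ hb ho.
set ca := fun i => \sum_(j < s) a i j.
set cb := fun i => \sum_(j < s) abar a b i j.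
have H : forall x y : bool,
  \sum_(i < s) b i * ((if x then ca i else cb i) * (if y then ca i else cb i))
  = 3%:R^-1.
  move=> x y.
  have := ho (BNode true [:: BNode x [::]; BNode y [::]]).
  rewrite /= addn0 muln1 => h; rewrite -h; last by case: hs => ->.
  apply: eq_bigr => i _; rewrite !mulr1 /ca /cb.
  clear h.
  have m1 : forall f : 'I_s -> R, \sum_(j < s) f j * 1 = \sum_(j < s) f j.
    by move=> f; apply: eq_bigr => *; rewrite mulr1.
  by case: x; case: y; rewrite /= !m1.
have Hxx := H true true; have Hxy := H true false; have Hyy := H false false.
rewrite /= in Hxx Hxy Hyy.
have E : \sum_(i < s) b i * (cb i - ca i) ^+ 2 = 0.
  have -> : \sum_(i < s) b i * (cb i - ca i) ^+ 2 =
    (\sum_(i < s) b i * (cb i * cb i) - \sum_(i < s) b i * (ca i * cb i))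
    - (\sum_(i < s) b i * (ca i * cb i) - \sum_(i < s) b i * (ca i * ca i)).
    rewrite -!sumrB; apply: eq_bigr => i _; ring.
  by rewrite Hxx Hxy Hyy; ring.
move=> i.
have hp : forall j : 'I_s, true -> 0 <= b j * (cb j - ca j) ^+ 2.
  by move=> j _; rewrite mulr_ge0 ?sqr_ge0 ?ltW.
have /eqP := @psumr_eq0P _ _ _ _ hp E i isT.
rewrite mulf_eq0 (gt_eqF (hb i)) /= sqrf_eq0 subr_eq0 => /eqP.
by rewrite /cb /ca => ->.
Qed.
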